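(* Let $\Omega$ be a finite set, $(H_i\mid i\in\Omega)$ finite abelian groups, $\mathbf{H}=\prod_{i\in\Omega}H_i$, and let $\mathbf{P}=(\Omega,\preccurlyeq_{\mathbf{P}})$ be a hierarchical poset. Then the dual partition $\Lambda$ of $\mathcal{Q}(\mathbf{H},\mathbf{P})$ is finer than $\mathcal{Q}(\hat{\mathbf{H}},\overline{\mathbf{P}})$.
   Context: $\hat{\mathbf{H}}$ is the character group of $\mathbf{H}$, identified with $\prod_i\hat{H_i}$ via $\alpha(\beta)=\prod_i\alpha_{(i)}(\beta_{(i)})$; $\mathrm{supp}$ of a codeword is the set of coordinates where it is not the identity. $\overline{\mathbf{P}}$ is the dual poset. For a poset $\mathbf{Q}$ on $\Omega$, $\langle B\rangle_{\mathbf{Q}}$ is the down-closure of $B$ in $\mathbf{Q}$ and $\mathrm{wt}_{\mathbf{Q}}(\beta)=|\langle\mathrm{supp}(\beta)\rangle_{\mathbf{Q}}|$. $\mathcal{Q}(\mathbf{H},\mathbf{P})$ (resp. $\mathcal{Q}(\hat{\mathbf{H}},\overline{\mathbf{P}})$) is the partition of $\mathbf{H}$ (resp. $\hat{\mathbf{H}}$) into classes of equal $\mathbf{P}$-weight (resp. $\overline{\mathbf{P}}$-weight). $\Lambda$ is the partition of $\hat{\mathbf{H}}$ with $\chi\sim\psi$ iff $\sum_{b\in B}\chi(b)=\sum_{b\in B}\psi(b)$ for every block $B$ of $\mathcal{Q}(\mathbf{H},\mathbf{P})$. A partition is finer than another if each of its blocks lies in a block of the other. $\mathrm{len}(y)$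 is the largest cardinality of a chain in $\mathbf{P}$ with greatest element $y$; $\mathbf{P}$ is hierarchical if $\mathrm{len}(u)+1\leqslant\mathrm{len}(v)$ implies $u\preccurlyeq_{\mathbf{P}}v$. *)

(* Defs.v *)
From mathcomp Require Import all_boot all_order all_algebra all_field.

Set Implicit Arguments.
Unset Strict Implicit.
Unset Printing Implicit Defensive.

Import GRing.Theory.
Local Open Scope ring_scope.

(* Coordinates Omega are a finType I; a poset on I is a relation le : rel I,
   le x y meaning x <=_P y. *)

Section Posets.
Variable I : finType.

Definition is_poset (le : rel I) : Prop :=
  reflexive le /\ antisymmetric le /\ transitive le.

Definition dual_rel (le : rel I) : rel I := fun x y => le y x.

Definition downset (le : rel I) (B : {set I}) : {set I} :=
  [set j | [exists i in B, le j i]].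

Definition is_chain (le : rel I) (C : {set I}) : bool :=
  [forall x in C, forall y in C, le x y || le y x].

Definition plen (le : rel I) (y : I) : nat :=
  \max_(C : {set I} | [&& is_chain le C, y \in C & [forall c in C, le c y]]) #|C|.

Definition hierarchical (le : rel I) : Prop :=
  forall u v, (plen le u + 1 <= plen le v)%N -> le u v.
End Posets.

Section Codes.
Variable I : finType.
Variable H : I -> finZmodType.

Definition Hprod := {dffun forall i, H i}.

Definition supp (a : Hprod) : {set I} := [set i | a i != 0].

Definition wt (le : rel I) (a : Hprod) : nat := #|downset le (supp a)|.

Definition is_character (G : finZmodType) (f : G -> algC) : Prop :=
  f 0 = 1 /\ forall x y, f (x + y) = f x * f y.

(* an element of \hat H, identified with a family (chi_i) of characters
   chi_i of H_i; it acts by chi(b) = prod_i chi_i(b_i) *)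
Definition char_eval (chi : forall i, H i -> algC) (b : Hprod) : algC :=
  \prod_i chi i (b i).

Definition char_supp (chi : forall i, H i -> algC) : {set I} :=
  [set i | [exists x : H i, chi i x != 1]].

Definition char_wt (le : rel I) (chi : forall i, H i -> algC) : nat :=
  #|downset le (char_supp chi)|.

(* chi ~_Lambda psi : equal sums over every block of Q(H,P); the blocks are
   the classes {b | wt b = wt b0} *)
Definition Lambda_rel (le : rel I) (chi psi : forall i, H i -> algC) : Prop :=
  forall b0 : Hprod,
    \sum_(b : Hprod | wt le b == wt le b0) char_eval chi b =
    \sum_(b : Hprod | wt le b == wt le b0) char_eval psi b.
End Codes.

(* Main.v *)
Require Import Defs.
From mathcomp Require Import all_boot all_order all_algebra all_field.
Set Implicit Arguments. Unset Strict Implicit. Unset Printing Implicit Defensive.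
Import GRing.Theory.
Local Open Scope ring_scope.


Lemma plen_lt (I : finType) (le : rel I) (u v : I) :
  is_poset le -> le u v -> u != v -> (plen le u < plen le v)%N.
Proof.
move=> [refl [anti trans]] luv nuv.
have ch1 : forall w, (0 < plen le w)%N.
  move=> w; apply: (@leq_trans #|[set w]|); first by rewrite cards1.
  apply: leq_bigmax_cond; apply/and3P; split; last 1 first.
  - by apply/forall_inP => c /set1P ->; apply: refl.
  - by apply/forall_inP => x /set1P -> ; apply/forall_inP => y /set1P ->; rewrite refl.
  - by rewrite set11.
suff : (plen le u <= (plen le v).-1)%N by have := ch1 v; case: (plen le v).
apply/bigmax_leqP => C /and3P [chC uC /forall_inP leC].
have vC : v \notin C.
  apply/negP => vC; move/negP: nuv; apply; apply/eqP/anti.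
  by rewrite luv (leC v vC).
rewrite -ltnS prednK ?ch1 //.
have -> : (#|C|.+1 = #|v |: C|)%N by rewrite cardsU1 vC.
apply: leq_bigmax_cond; apply/and3P; split.
- apply/forall_inP => x /setU1P [->|xC]; apply/forall_inP => y /setU1P [->|yC].
  + by rewrite refl.
  + by rewrite (trans _ _ _ (leC y yC) luv) orbT.
  + by rewrite (trans _ _ _ (leC x xC) luv).
  + by move/forall_inP: chC => /(_ x xC) /forall_inP /(_ y yC).
- exact: setU11.
- apply/forall_inP => c /setU1P [->|cC]; first exact: refl.
  exact: (trans _ _ _ (leC c cC) luv).
Qed.

Lemma plen_mono (I : finType) (le : rel I) (u v : I) :
  is_poset le -> le u v -> (plen le u <= plen le v)%N.
Proof.
move=> po luv; case: (eqVneq u v) => [->//|nuv].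
exact/ltnW/plen_lt.
Qed.

Lemma plen_eq (I : finType) (le : rel I) (u v : I) :
  is_poset le -> le u v -> plen le u = plen le v -> u = v.
Proof.
move=> po luv e; case: (eqVneq u v) => // nuv.
by have := plen_lt po luv nuv; rewrite e ltnn.
Qed.

Lemma cardsU_disj (I : finType) (A B : {set I}) :
  [disjoint A & B] -> #|A :|: B| = (#|A| + #|B|)%N.
Proof. by move=> d; rewrite cardsU (disjoint_setI0 d) cards0 subn0. Qed.

Section Lev.
Definition Aset (I : finType) (le : rel I) k := [set i | (plen le i < k)%N].
Definition Lset (I : finType) (le : rel I) k := [set i | plen le i == k].
Definition Uset (I : finType) (le : rel I) k := [set i | (k < plen le i)%N].
End Lev.

Lemma disjAL (I : finType) (le : rel I) k (S : {set I}) :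
  [disjoint Aset le k & S :&: Lset le k].
Proof.
apply/pred0P => i /=; rewrite !inE; apply/negP => /and3P [a _ /eqP l].
by rewrite l ltnn in a.
Qed.

Lemma down_small (I : finType) (le : rel I) k (S : {set I}) :
  is_poset le -> S \subset Aset le k -> downset le S \subset Aset le k.
Proof.
move=> po /subsetP sS; apply/subsetP => j; rewrite inE => /exists_inP [i iS lji].
have := sS i iS; rewrite !inE => lt; exact: leq_ltn_trans (plen_mono po lji) lt.
Qed.

Lemma down_mid (I : finType) (le : rel I) k (S : {set I}) :
  is_poset le -> hierarchical le ->
  S \subset Aset le k :|: Lset le k -> S :&: Lset le k != set0 ->
  downset le S = Aset le k :|: (S :&: Lset le k).
Proof.
move=> po hi /subsetP sS /set0Pn [i0]; rewrite !inE => /andP [i0S /eqP li0].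
apply/setP => j; rewrite !inE; apply/idP/idP.
- case/exists_inP => i iS lji.
  have lj := plen_mono po lji.
  have := sS i iS; rewrite !inE => /orP [ai|/eqP li].
    by rewrite (leq_ltn_trans lj ai).
  have [ljk|gjk|ej] := ltngtP (plen le j) k.
  - by [].
  - by rewrite -li ltnNge lj in gjk.
  have ji := plen_eq po lji (etrans ej (esym li)).
  by rewrite ji iS.
- case/orP => [aj|/andP [jS lj]].
  + apply/exists_inP; exists i0 => //; apply: hi; rewrite addn1 li0 //.
  + apply/exists_inP; exists j => //; by case: po => r _; apply: r.
Qed.

Lemma down_big (I : finType) (le : rel I) k (S : {set I}) :
  is_poset le -> hierarchical le ->
  ~~ (S \subset Aset le k :|: Lset le k) ->
  (#|Aset le k| + #|Lset le k| < #|downset le S|)%N.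
Proof.
move=> po hi /subsetPn [i iS]; rewrite !inE negb_or -leqNgt => /andP [ki nki].
have gi : (k < plen le i)%N by rewrite ltn_neqAle eq_sym nki ki.
have -> : (#|Aset le k| + #|Lset le k| = #|Aset le k :|: Lset le k|)%N.
  rewrite cardsU_disj //; apply/pred0P => j /=; rewrite !inE.
  by apply/negP => /andP [a /eqP l]; rewrite l ltnn in a.
apply: proper_card; apply/properP; split.
  apply/subsetP => j; rewrite !inE => jAL; apply/exists_inP; exists i => //.
  apply: hi; rewrite addn1; apply: leq_trans gi; rewrite ltnS.
  by case/orP: jAL => [/ltnW|/eqP ->].
exists i; first by rewrite inE; apply/exists_inP; exists i => //; case: po => r _; apply: r.
by rewrite !inE negb_or -leqNgt ki nki.
Qed.

Lemma up_mid (I : finType) (le : rel I) k (S : {set I}) :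
  is_poset le -> hierarchical le ->
  [disjoint S & Aset le k] -> S :&: Lset le k != set0 ->
  downset (dual_rel le) S = (S :&: Lset le k) :|: Uset le k.
Proof.
move=> po hi dS /set0Pn [i0]; rewrite !inE => /andP [i0S /eqP li0].
have geS : forall i, i \in S -> (k <= plen le i)%N.
  move=> i iS; rewrite leqNgt; apply/negP => lt.
  by move/pred0P: dS => /(_ i) /=; rewrite iS inE lt.
apply/setP => j; rewrite !inE; apply/idP/idP.
- case/exists_inP => i iS; rewrite /dual_rel => lij.
  have lj := plen_mono po lij.
  have ki := geS i iS.
  have [ljk|gjk|ej] := ltngtP (plen le j) k.
  + by have := leq_ltn_trans ki (leq_ltn_trans lj ljk); rewrite ltnn.
  + by rewrite orbT.
  + have ei : plen le i = k by apply/eqP; rewrite eqn_leq ki -ej lj.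
    have ij := plen_eq po lij (etrans ei (esym ej)).
    by rewrite -ij iS.
- case/orP => [/andP [jS _]|gj].
  + apply/exists_inP; exists j => //; by case: po => r _; apply: r.
  + apply/exists_inP; exists i0 => //; apply: hi; rewrite addn1 li0 //.
Qed.

Definition cfac (I : finType) (le : rel I) k i : {poly algC} :=
  if i \in Aset le k then 1 else if i \in Lset le k then 'X else 0.

Definition wfac (I : finType) (H : I -> finZmodType) (le : rel I) k i (x : H i) : {poly algC} :=
  if x == 0 then 1 else cfac le k i.

Definition gfun (a l w : nat) : {poly algC} := if (w <= a + l)%N then 'X^(w - a) else 0.

Lemma g_wt (I : finType) (H : I -> finZmodType) (le : rel I) k (b : Hprod H) :
  is_poset le -> hierarchical le ->
  gfun #|Aset le k| #|Lset le k| (wt le b) = \prod_i wfac le k (b i).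
Proof.
move=> po hi; rewrite /gfun /wt.
set S := supp b.
case: (boolP (S \subset Aset le k :|: Lset le k)) => sS; last first.
  have := down_big po hi sS; rewrite ltnNge => /negbTE ->.
  move/subsetPn: sS => [i iS niAL].
  rewrite (bigD1 i) //= /wfac; move: iS; rewrite inE => /negbTE ->.
  move: niAL; rewrite /cfac inE negb_or => /andP [/negbTE -> /negbTE ->].
  by rewrite mul0r.
have -> : \prod_i wfac le k (b i) = \prod_i (if i \in S :&: Lset le k then 'X else 1).
  apply: eq_bigr => i _; rewrite /wfac /cfac !inE.
  case: (eqVneq (b i) 0) => //= bi.
  move/subsetP: sS => /(_ i); rewrite !inE bi => /(_ isT) /orP [a|/eqP l].
    by rewrite a; case: eqP => // e; rewrite e ltnn in a.
  by rewrite l ltnn eqxx.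
rewrite -big_mkcond prodr_const.
case: (eqVneq (S :&: Lset le k) set0) => [e|ne].
  have sA : S \subset Aset le k.
    apply/subsetP => i iS; move/subsetP: sS => /(_ i iS); rewrite inE => /orP [//|iL].
    by move: e => /setP /(_ i); rewrite in_setI iS iL in_set0.
  have := subset_leq_card (down_small po sA) => c.
  rewrite (leq_trans c (leq_addr _ _)) e cards0.
  by move: c; rewrite -subn_eq0 => /eqP ->.
rewrite (down_mid po hi sS ne) cardsU_disj ?disjAL // leq_add2l subset_leq_card ?subsetIr //.
by rewrite addKn.
Qed.

Lemma prod_sum_dffun (R : comNzRingType) (I : finType) (T_ : I -> finType)
  (F : forall i, T_ i -> R) :
  \prod_i \sum_(x : T_ i) F i x = \sum_(b : {dffun forall i, T_ i}) \prod_i F i (b i).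
Proof.
rewrite [RHS](reindex (@dffun_of_fprod I T_)); last exact/onW_bij/dffun_of_fprod_bij.
pose P_ i := [ffun x => F i x].
transitivity (\sum_(t : fprod T_) \prod_(i in I) P_ i (t i)); last first.
  by apply: eq_bigr => b _; apply: eq_bigr => i _; rewrite !ffunE.
rewrite big_fprod.
under eq_bigr => i _ do rewrite (big_tag (T_ := T_)).
rewrite bigA_distr_big_dep; apply: eq_bigr => g _; apply: eq_bigr => i _.
rewrite /untag; case: eqP => // e; by rewrite ffunE.
Qed.

Lemma lambda_sum (I : finType) (H : I -> finZmodType) (le : rel I)
  (chi psi : forall i, H i -> algC) (g : nat -> {poly algC}) :
  Lambda_rel le chi psi ->
  \sum_(b : Hprod H) char_eval chi b *: g (wt le b) =
  \sum_(b : Hprod H) char_eval psi b *: g (wt le b).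
Proof.
move=> La.
have wle : forall b : Hprod H, (wt le b < #|I|.+1)%N by move=> b; rewrite ltnS max_card.
have E : forall (phi : forall i, H i -> algC),
  \sum_(b : Hprod H) char_eval phi b *: g (wt le b) =
  \sum_(j < #|I|.+1) (\sum_(b : Hprod H | wt le b == j) char_eval phi b) *: g j.
  move=> phi.
  rewrite (partition_big (fun b : Hprod H => (inord (wt le b) : 'I_#|I|.+1)) xpredT) //.
  apply: eq_bigr => j _; rewrite scaler_suml; apply: eq_big => b.
    by rewrite -val_eqE /= inordK.
  by rewrite -val_eqE /= inordK // => /eqP ->.
rewrite !E; apply: eq_bigr => j _; congr (_ *: _).
case: (pickP (fun b : Hprod H => wt le b == j)) => [b0 /eqP b0j|n0].
  by rewrite -b0j; apply: La.
by rewrite !big_pred0.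
Qed.

Lemma char_sum (G : finZmodType) (f : G -> algC) : is_character f ->
  \sum_x f x = if [forall x, f x == 1] then #|G|%:R else 0.
Proof.
move=> [f0 fM]; case: ifP => [/forallP t|/negbT/forallPn [y /eqP ny]].
  by under eq_bigr => x _ do rewrite (eqP (t x)); rewrite sumr_const.
have : \sum_x f x = f y * \sum_x f x.
  rewrite mulr_sumr (reindex_inj (addIr y)) /=; apply: eq_bigr => x _.
  by rewrite fM mulrC.
move/eqP; rewrite -subr_eq0 -{1}[\sum_x f x]mul1r -mulrBl mulf_eq0 subr_eq0.
by rewrite eq_sym (negbTE (introN eqP ny)) => /eqP.
Qed.

Lemma expansion (I : finType) (H : I -> finZmodType) (le : rel I) k
  (chi : forall i, H i -> algC) :
  is_poset le -> hierarchical le -> (forall i, is_character (chi i)) ->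
  \sum_(b : Hprod H) char_eval chi b *: gfun #|Aset le k| #|Lset le k| (wt le b) =
  \prod_i (1 + ((\sum_x chi i x) - 1) *: cfac le k i).
Proof.
move=> po hi ch.
rewrite (eq_bigr (fun b : Hprod H => \prod_i (chi i (b i) *: wfac le k (b i)))); last first.
  by move=> b _; rewrite (g_wt k b po hi) /char_eval -scaler_prod.
rewrite -(prod_sum_dffun (fun i (x : H i) => chi i x *: wfac le k x)); apply: eq_bigr => i _.
have [c0 _] := ch i.
rewrite (bigD1 0) //= /wfac eqxx c0 scale1r; congr (1 + _).
rewrite [\sum_x chi i x](bigD1 0) //= c0 addrC addrK scaler_suml.
by apply: eq_bigr => x /negbTE ->.
Qed.

Lemma one_sub_X_neq0 : (1 - 'X : {poly algC}) != 0.
Proof.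
apply/negP => /eqP e; have := congr1 (horner^~ 0) e.
by rewrite !hornerE subr0 => /eqP; rewrite oner_eq0.
Qed.

Lemma mult_uniq (t t' : nat) (q q' : {poly algC}) :
  q.[1] != 0 -> q'.[1] != 0 ->
  (1 - 'X) ^+ t * q = (1 - 'X) ^+ t' * q' -> t = t'.
Proof.
wlog le_tt' : t t' q q' / (t <= t')%N.
  move=> W q1 q'1 e; case: (leqP t t') => h; first exact: (W t t' q q' h q1 q'1 e).
  exact: esym (W t' t q' q (ltnW h) q'1 q1 (esym e)).
move=> q1 q'1; rewrite -(subnKC le_tt') exprD -mulrA => /mulfI.
move/(_ (expf_neq0 _ one_sub_X_neq0)) => e.
move: q1; rewrite e hornerM horner_exp !hornerE subrr expr0n.
by case: (t' - t)%N => [|d] /=; [rewrite addn0 | rewrite mul0r eqxx].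
Qed.

Lemma notin_supp (I : finType) (H : I -> finZmodType) (phi : forall i, H i -> algC) j :
  (j \notin char_supp phi) = [forall x, phi j x == 1].
Proof. by rewrite inE negb_exists; apply: eq_forallb => x; rewrite negbK. Qed.

Lemma fac_nA (I : finType) (H : I -> finZmodType) (le : rel I) k (phi : forall i, H i -> algC) :
  \prod_(i | i \notin Aset le k) (1 + ((\sum_x phi i x) - 1) *: cfac le k i) =
  \prod_(i in Lset le k) (1 + ((\sum_x phi i x) - 1) *: 'X).
Proof.
rewrite (bigID (mem (Lset le k))) /= [X in _ * X]big1 ?mulr1; last first.
  by move=> i /andP [nA nL]; rewrite /cfac (negbTE nA) (negbTE nL) scaler0 addr0.
apply: eq_big => i.
  rewrite andb_idl // !inE => /eqP ->; by rewrite ltnn.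
by move=> /andP [nA nL]; rewrite /cfac (negbTE nA) nL.
Qed.

Lemma card_neq0 (G : finZmodType) : (#|G|%:R : algC) != 0.
Proof. by rewrite Num.Theory.pnatr_eq0 -lt0n; apply/card_gt0P; exists 0. Qed.

Lemma PL_split (I : finType) (H : I -> finZmodType) (L : {set I}) (phi : forall i, H i -> algC) :
  (forall i, is_character (phi i)) ->
  exists2 q : {poly algC}, q.[1] != 0 &
  \prod_(i in L) (1 + ((\sum_x phi i x) - 1) *: 'X) =
  (1 - 'X) ^+ #|char_supp phi :&: L| * q.
Proof.
move=> ch.
exists (\prod_(i in L | i \notin char_supp phi) (1 + ((#|H i|%:R : algC) - 1) *: 'X)).
  rewrite horner_prod; apply/prodf_neq0 => i _.
  by rewrite hornerD hornerZ hornerX mulr1 -polyC1 hornerC addrC subrK card_neq0.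
rewrite (bigID (fun i => i \in char_supp phi)) /=; congr (_ * _).
  rewrite (eq_bigl (fun i => i \in char_supp phi :&: L)); last by move=> i; rewrite in_setI andbC.
  rewrite -prodr_const; apply: eq_bigr => i; rewrite inE => /andP [s _].
  rewrite char_sum // -notin_supp s /= sub0r scaleN1r //.
apply: eq_bigr => i /andP [_ ns]; rewrite char_sum // -notin_supp ns //.
Qed.

Unset Implicit Arguments.

Theorem corollary2p2 (I : finType) (H : I -> finZmodType) (le : rel I) :
  is_poset le -> hierarchical le ->
  forall chi psi : forall i, H i -> algC,
    (forall i, is_character (chi i)) ->
    (forall i, is_character (psi i)) ->
    Lambda_rel le chi psi ->
    char_wt (dual_rel le) chi = char_wt (dual_rel le) psi.
Proof.
move=> po hi chi psi chc chp La.
set N := char_supp chi :|: char_supp psi.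
case: (set_0Vmem N) => [N0 | [i0 i0N]].
  move: N0 => /setP N0.
  have e1 : char_supp chi = set0.
    by apply/setP => j; have := N0 j; rewrite in_setU in_set0 => /negbT /norP [/negbTE ->].
  have e2 : char_supp psi = set0.
    by apply/setP => j; have := N0 j; rewrite in_setU in_set0 => /negbT /norP [_ /negbTE ->].
  by rewrite /char_wt e1 e2.
case: (@arg_minnP _ i0 (mem N) (plen le) i0N) => i iN imin.
set k := plen le i.
set A := Aset le k; set L := Lset le k.
have trivA : forall (phi : forall i, H i -> algC), N = char_supp chi :|: char_supp psi ->
   (phi = chi \/ phi = psi) -> forall j, j \in A -> j \notin char_supp phi.
  move=> phi _ hphi j; rewrite inE => jk; apply/negP => js.
  have jN : j \in N by case: hphi => -> in js; rewrite in_setU js ?orbT.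
  by have := imin j jN; rewrite leqNgt jk.
have tA1 := trivA chi erefl (or_introl erefl).
have tA2 := trivA psi erefl (or_intror erefl).
have E := lambda_sum (gfun #|A| #|L|) La.
rewrite !(expansion k po hi) // in E.
move: E; rewrite (bigID (mem A)) /= [X in _ = X -> _](bigID (mem A)) /= => E.
rewrite !fac_nA in E.
have eqA : \prod_(i in A) (1 + ((\sum_x chi i x) - 1) *: cfac le k i) =
           \prod_(i in A) (1 + ((\sum_x psi i x) - 1) *: cfac le k i).
  apply: eq_bigr => j jA.
  by rewrite !char_sum // -!notin_supp (tA1 j jA) (tA2 j jA).
have nzA : \prod_(i in A) (1 + ((\sum_x chi i x) - 1) *: cfac le k i) != 0.
  apply/prodf_neq0 => j jA.
  rewrite char_sum // -notin_supp (tA1 j jA) /cfac jA.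
  by rewrite alg_polyC -polyC1 -polyCD addrC subrK polyC_eq0 card_neq0.
rewrite -eqA in E; move/(mulfI nzA): E => E.
have [q1 nq1 e1] := PL_split L chc.
have [q2 nq2 e2] := PL_split L chp.
rewrite e1 e2 in E.
have tt := mult_uniq nq1 nq2 E.
have disj : forall (phi : forall i, H i -> algC), (forall j, j \in A -> j \notin char_supp phi) ->
  [disjoint char_supp phi & A].
  move=> phi tr; apply/pred0P => j /=; apply/negP => /andP [js jA].
  by move: (tr j jA); rewrite js.
have ne : (0 < #|char_supp chi :&: L|)%N.
  have : i \in char_supp chi :|: char_supp psi by exact: iN.
  rewrite in_setU => /orP [ic|ip].
    by apply/card_gt0P; exists i; rewrite in_setI ic inE eqxx.
  by rewrite tt; apply/card_gt0P; exists i; rewrite in_setI ip inE eqxx.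
have ne1 : char_supp chi :&: L != set0 by rewrite -card_gt0.
have ne2 : char_supp psi :&: L != set0 by rewrite -card_gt0 -tt.
have dU : forall S : {set I}, [disjoint S :&: L & Uset le k].
  move=> S; apply/pred0P => j /=; rewrite !inE; apply/negP => /andP [/andP [_ /eqP ->]].
  by rewrite ltnn.
rewrite /char_wt (up_mid po hi (disj _ tA1) ne1) (up_mid po hi (disj _ tA2) ne2).
by rewrite !cardsU_disj // tt.
Qed.
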